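(* There exists a nonnegative sequence $\{\lambda_n\}_{n=1}^\infty\in\mathrm{GBV}$ with $\{\lambda_n\}\notin R_0^+\mathrm{BV}$ such that $$\sum_{n=1}^\infty n^{p+p\gamma-2}\lambda_n^p<\infty$$ for every $1<p<\infty$ and every $\gamma$ with $1/p-1<\gamma<1/p$.
   Context: $\Delta c_n:=c_n-c_{n+1}$. A sequence $\mathbf c=\{c_n\}_{n=1}^\infty$ belongs to the class $\mathrm{GBV}$ if $c_n\ge 0$ for all $n$, $c_n\to 0$ as $n\to\infty$, and there is a positive constant $M(\mathbf c)$ depending only on $\mathbf c$ such that $\sum_{n=m}^{2m}|\Delta c_n|\le M(\mathbf c)\,c_m$ for all $m=1,2,\dots$. A nonnegative sequence $\mathbf b=\{b_n\}$ with $b_n\to0$ belongs to $R_0^+\mathrm{BV}$ (''rest bounded variation'') if there is a constant $M(\mathbf b)$ depending only on $\mathbf b$ such that $\sum_{n=m}^\infty|b_n-b_{n+1}|\le M(\mathbf b)\,b_m$ for all $m=1,2,\dots$. *)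

(* Defs.v *)
(* Sequences are nat -> R; the paper's index set
   {1,2,...} is used, the value at index 0 is ignored. *)
From HB Require Import structures.
From mathcomp Require Import all_boot all_order all_algebra.
From mathcomp Require Import all_classical all_reals all_analysis.
Set Implicit Arguments. Unset Strict Implicit. Unset Printing Implicit Defensive.
Import Order.TTheory GRing.Theory Num.Theory.
Import numFieldNormedType.Exports.
Local Open Scope classical_set_scope.
Local Open Scope ring_scope.

Definition Delta (R : realType) (c : nat -> R) (n : nat) : R := c n - c n.+1.

Definition GBV (R : realType) (c : nat -> R) : Prop :=
  (forall n, (1 <= n)%N -> 0 <= c n) /\
  c @ \oo --> (0 : R) /\
  exists M : R, 0 < M /\
    forall m, (1 <= m)%N ->
      \sum_(m <= n < (2 * m).+1) `|Delta c n| <= M * c m.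

(* Class R_0^+ BV ("rest bounded variation"); the tail sum is taken in the
   extended reals (it may a priori diverge). *)
Definition R0BV (R : realType) (b : nat -> R) : Prop :=
  (forall n, (1 <= n)%N -> 0 <= b n) /\
  b @ \oo --> (0 : R) /\
  exists M : R,
    forall m, (1 <= m)%N ->
      (\sum_(m <= n <oo) (`|b n - b n.+1|)%:E <= (M * b m)%:E)%E.

(* Main.v *)
Require Import Defs.
From HB Require Import structures.
From mathcomp Require Import all_boot all_order all_algebra.
From mathcomp Require Import all_classical all_reals all_analysis.
From mathcomp Require Import zify ring lra.
Import Order.TTheory GRing.Theory Num.Theory.
Import numFieldNormedType.Exports.
Local Open Scope classical_set_scope.
Local Open Scope ring_scope.

Definition L (n : nat) : nat := trunc_log 2 n.
Definition ee (j : nat) : nat := (2 + 6 * 2 ^ L j - j)%N.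

Lemma L_ltn n : (n < 2 ^ (L n).+1)%N.
Proof. exact: trunc_log_ltn. Qed.

Lemma L_eq n k : (2 ^ k <= n < 2 ^ k.+1)%N -> L n = k.
Proof. exact: trunc_log_eq. Qed.

Lemma L_le m n : (m <= n)%N -> (L m <= L n)%N.
Proof. exact: leq_trunc_log. Qed.

Lemma ee_ge j : (2 * j + 2 <= ee j)%N.
Proof.
have := L_ltn j; rewrite expnS /ee => h; lia.
Qed.

Lemma ee_step j : (ee j <= (ee j.+1).+1)%N.
Proof.
have h : (2 ^ L j <= 2 ^ L j.+1)%N by rewrite leq_pexp2l // L_le.
have := L_ltn j; rewrite expnS /ee => h2; lia.
Qed.

Lemma ee_sq n : (n.+1 ^ 2 <= 2 ^ ee (L n))%N.
Proof.
have h1 : (n.+1 <= 2 ^ (L n).+1)%N by exact: L_ltn.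
have h2 : (n.+1 ^ 2 <= (2 ^ (L n).+1) ^ 2)%N by rewrite leq_exp2r.
apply: (leq_trans h2); rewrite -expnM leq_pexp2l //.
have := ee_ge (L n); lia.
Qed.

Lemma ee_dip t : ee (2 ^ t) = ((ee (2 ^ t.+1 - 1)) + (2 ^ t - 1))%N.
Proof.
have e1 : L (2 ^ t) = t by apply: L_eq; rewrite leqnn /= ltn_exp2l.
have e2 : L (2 ^ t.+1 - 1) = t.
  apply: L_eq; rewrite expnS; have := expn_gt0 2 t; lia.
rewrite /ee e1 e2 expnS; have := expn_gt0 2 t; lia.
Qed.

Section S.
Variable R : realType.
Definition c (j : nat) : R := (2^-1) ^+ ee j.
Definition lam (n : nat) : R := c (L n).

Lemma c_gt0 j : 0 < c j.
Proof. by rewrite /c exprn_gt0 // invr_gt0. Qed.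

Lemma c_step j : c j.+1 <= 2 * c j.
Proof.
rewrite /c.
have -> : (2^-1 : R) ^+ ee j.+1 = 2 * (2^-1) ^+ (ee j.+1).+1.
  by rewrite exprS mulrA divff ?mul1r // pnatr_eq0.
rewrite ler_pM2l //; apply: ler_wiXn2l; last exact: ee_step.
  by rewrite invr_ge0.
by rewrite invf_le1 // ler1n.
Qed.

Lemma lam_sq n : lam n * (n.+1 ^ 2)%:R <= 1.
Proof.
rewrite /lam /c exprVn.
have h : ((n.+1 ^ 2)%:R : R) <= (2 ^ ee (L n))%:R by rewrite ler_nat ee_sq.
rewrite mulrC -natrX ler_pdivrMr ?mul1r //.
Qed.

Lemma c_dip t : c (2 ^ t.+1 - 1) = 2 ^+ (2 ^ t - 1) * c (2 ^ t).
Proof.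
rewrite /c ee_dip exprD mulrCA -exprMn divff ?expr1n ?mulr1 //.
Qed.

End S.

Section S.
Variable R : realType.

Lemma lam_ge0 n : 0 <= lam R n.
Proof. exact/ltW/c_gt0. Qed.

Lemma lam_inv n : lam R n <= (n.+1%:R)^-1.
Proof.
have h := lam_sq R n.
rewrite -[X in _ <= X]mul1r ler_pdivlMr ?ltr0n //.
apply: le_trans h; rewrite ler_wpM2l ?lam_ge0 // ler_nat.
by rewrite expnS expn1 leq_pmull.
Qed.

Lemma window m : (1 <= m)%N ->
  \sum_(m <= n < (2 * m).+1) `|Delta (lam R) n| = `|c R (L m) - c R (L m).+1|.
Proof.
move=> m1.
have [j Ej] : {j | L m = j} by exists (L m).
rewrite Ej.
have hm1 : (2 ^ j <= m)%N by rewrite -Ej; exact: trunc_logP.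
have hm2 : (m < 2 ^ j.+1)%N by rewrite -Ej; exact: L_ltn.
have hp : (0 < 2 ^ j)%N by rewrite expn_gt0.
have e2 : (2 ^ j.+1 = 2 * 2 ^ j)%N by rewrite expnS.
have [n0 En0] : {n0 | n0 = (2 ^ j.+1 - 1)%N} by exists (2 ^ j.+1 - 1)%N.
rewrite (@big_cat_nat _ _ _ n0); [|lia|lia].
rewrite (@big_cat_nat _ _ _ n0.+1 n0); [|lia|lia].
rewrite big_nat1.
rewrite big_nat_cond big1; last first.
  move=> i /andP[/andP[hi1 hi2] _].
  rewrite /Delta /lam.
  have -> : L i = j by apply: L_eq; lia.
  have -> : L i.+1 = j by apply: L_eq; lia.
  by rewrite subrr normr0.
rewrite /= add0r [X in _ + X]big_nat_cond [X in _ + X]big1; last first.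
  move=> i /andP[/andP[hi1 hi2] _].
  rewrite /Delta /lam.
  have -> : L i = j.+1 by apply: L_eq; rewrite !expnS; lia.
  have -> : L i.+1 = j.+1 by apply: L_eq; rewrite !expnS; lia.
  by rewrite subrr normr0.
rewrite addr0 /Delta /lam.
have -> : L n0 = j by apply: L_eq; lia.
have -> : L n0.+1 = j.+1 by apply: L_eq; rewrite !expnS; lia.
by [].
Qed.

Lemma telesc a b : (a <= b)%N ->
  `|lam R b - lam R a| <= \sum_(a <= n < b) `|lam R n - lam R n.+1|.
Proof.
elim: b => [|b IH] hab.
  have -> : a = 0%N by lia.
  by rewrite subrr normr0 big_geq.
case: (ltnP a b.+1) => h; last first.
  have -> : a = b.+1 by lia.
  by rewrite subrr normr0 big_geq.
rewrite big_nat_recr /=; last by lia.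
have := IH (ltnSE h).
have t : `|lam R b.+1 - lam R a| <= `|lam R b - lam R a| + `|lam R b - lam R b.+1|.
  have -> : lam R b.+1 - lam R a = (lam R b - lam R a) - (lam R b - lam R b.+1) by ring.
  exact: ler_normB.
move=> h2; apply: le_trans t _; exact: lerD.
Qed.

Lemma lam_cvg : lam R @ \oo --> (0 : R).
Proof.
apply: (@squeeze_cvgr _ _ _ _ (fun=> 0) (@harmonic R)).
- by apply: nearW => n; rewrite lam_ge0 /= lam_inv.
- exact: cvg_cst.
- exact: cvg_harmonic.
Qed.

End S.

Section S.
Variable R : realType.

Lemma nl_le1 n : n%:R * lam R n <= 1.
Proof.
apply: le_trans (lam_sq R n); rewrite mulrC ler_wpM2l ?lam_ge0 // ler_nat.
rewrite expnS expn1; apply: (@leq_trans n.+1) => //; exact: leq_pmull.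
Qed.

Lemma term_le (p a : R) n : (1 <= n)%N -> 1 < p -> a <= p - 1 ->
  n%:R `^ a * lam R n `^ p <= lam R n.
Proof.
move=> n1 p1 ha.
have x1 : 1 <= (n%:R : R) by rewrite ler1n.
have l0 := c_gt0 R (L n).
have l0' : 0 < lam R n by exact: l0.
apply: (@le_trans _ _ (n%:R `^ (p - 1) * lam R n `^ p)).
  by rewrite ler_wpM2r ?powR_ge0 // ler_powR.
have p0 : 0 < p by apply: lt_trans p1.
have x0 : (0 : R) <= n%:R by [].
rewrite -(mulr_powRB1 (ltW l0') p0).
rewrite mulrCA -(powRM _ x0 (ltW l0')).
rewrite -[X in _ <= X]mulr1 ler_wpM2l ?(ltW l0') //.
rewrite -[X in _ <= X](powRr0 (n%:R * lam R n)).
apply: ger_powR; last by rewrite subr_ge0 ltW.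
by rewrite nl_le1 andbT mulr_gt0 // (lt_le_trans ltr01).
Qed.

Lemma sumlam N : \sum_(1 <= n < N.+1) lam R n <= 1 - (N.+1%:R)^-1.
Proof.
elim: N => [|N IH].
  by rewrite big_geq // invr1 subrr.
rewrite big_nat_recr //=.
set a : R := N.+1%:R.
have a0 : 0 < a by rewrite ltr0n.
have hs := lam_sq R N.+1.
have e : ((N.+2 ^ 2)%:R : R) = (a + 1) ^+ 2 by rewrite natrX -natr1.
rewrite e in hs.
have e2 : (N.+2%:R : R) = a + 1 by rewrite -natr1.
rewrite e2.
have hl : lam R N.+1 <= (a * (a + 1))^-1.
  rewrite -[X in _ <= X]mul1r ler_pdivlMr; last by rewrite mulr_gt0 // addr_gt0.
  apply: le_trans hs; have := lam_ge0 R N.+1; nra.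
have e3 : 1 - (a + 1)^-1 = (1 - a^-1) + (a * (a + 1))^-1.
  by field; apply/andP; split; rewrite lt0r_neq0 // addr_gt0.
rewrite e3; exact: lerD.
Qed.

End S.

Lemma L_pow e : L (2 ^ e) = e.
Proof. by apply: L_eq; rewrite leqnn /= ltn_exp2l. Qed.

Theorem theorem3 (R : realType) :
  exists lam : nat -> R,
    (forall n, (1 <= n)%N -> 0 <= lam n) /\
    GBV lam /\ ~ R0BV lam /\
    forall p gamma : R, 1 < p -> p^-1 - 1 < gamma -> gamma < p^-1 ->
      (\sum_(1 <= n <oo)
         ((n%:R) `^ (p + p * gamma - 2) * (lam n) `^ p)%:E < +oo)%E.
Proof.
exists (lam R); split; first by move=> n _; exact: lam_ge0.
split.
  split; first by move=> n _; exact: lam_ge0.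
  split; first exact: lam_cvg.
  exists 3; split => // m m1.
  rewrite window //.
  have h1 := c_step R (L m).
  have h2 := c_gt0 R (L m).
  have h3 := c_gt0 R (L m).+1.
  rewrite /lam; apply: le_trans (ler_normB _ _) _.
  rewrite !gtr0_norm //; lra.
split.
  move=> [_ [_ [M HM]]].
  set t := Num.bound (`|M| + 1).
  have ht : `|M| + 1 < t%:R by apply: archi_boundP; rewrite addr_ge0.
  set m := (2 ^ (2 ^ t))%N.
  set k := (2 ^ (2 ^ t.+1 - 1))%N.
  have m1 : (1 <= m)%N by rewrite expn_gt0.
  have mk : (m <= k)%N.
    rewrite leq_pexp2l // expnS; have := expn_gt0 2 t; lia.
  have := HM m m1.
  have := @nneseries_lim_ge R (fun n => (`|lam R n - lam R n.+1|)%:E) xpredT m k.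
  move=> /(_ (fun n _ _ => normr_ge0 _)) hle hM.
  have := le_trans hle hM; rewrite sumEFin lee_fin => hs.
  have := @telesc R _ _ mk; move=> /le_trans /(_ hs) hk.
  have hd : lam R k = 2 ^+ (2 ^ t - 1) * lam R m.
    by rewrite /lam /k /m !L_pow c_dip.
  have hm0 : 0 < lam R m := c_gt0 R _.
  have : lam R k - lam R m <= M * lam R m := le_trans (ler_norm _) hk.
  rewrite hd => hh.
  have hh2 : (2 ^+ (2 ^ t - 1) : R) <= M + 1.
    rewrite -(ler_pM2r hm0); lra.
  have tl : (t <= 2 ^ (2 ^ t - 1))%N.
    have := ltn_expl t (isT : (1 < 2)%N).
    have := ltn_expl (2 ^ t - 1) (isT : (1 < 2)%N); lia.
  have : (t%:R : R) <= 2 ^+ (2 ^ t - 1) by rewrite -natrX ler_nat.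
  have := ler_norm M; lra.
move=> p gamma p1 hg1 hg2.
have ha : p + p * gamma - 2 <= p - 1.
  have p0 : 0 < p by apply: lt_trans p1.
  have : p * gamma < p * p^-1 by rewrite ltr_pM2l.
  rewrite divff ?lt0r_neq0 //; lra.
apply: (@le_lt_trans _ _ 1%:E); last exact: ltry.
apply: lime_le.
  apply: is_cvg_nneseries => n _ _.
  by rewrite lee_fin mulr_ge0 // powR_ge0.
apply: nearW => N.
rewrite sumEFin lee_fin.
case: N => [|N]; first by rewrite big_geq.
apply: (@le_trans _ _ (\sum_(1 <= i < N.+1) lam R i)).
  rewrite big_nat_cond [X in _ <= X]big_nat_cond.
  apply: ler_sum => n /andP[/andP[n1 _] _]; exact: term_le.
apply: le_trans (sumlam R N) _.
by rewrite lerBlDr lerDl invr_ge0.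
Qed.
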